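(* In the setting of 2D Toom-Cook convolution described in the context, if every dot product in the linear transforms is computed by linear (recursive) summation of the rounded products, with arbitrary matrix entries, then $$|\hat S-S|\le |A^T|\big(|G|\,|H|\,|G^T|\odot|B^T|\,|X|\,|B|\big)|A|\,(2n_h+4n+7)\varepsilon+O(\varepsilon^2)$$ and $$\|\hat S-S\|_1\le \|A^T\|_1\|G\|_F\|H\|_F\|G^T\|_F\|B^T\|_F\|X\|_F\|B\|_F\|A\|_1\,(2n_h+4n+7)\varepsilon+O(\varepsilon^2).$$
   Context: $n=n_o+n_h-1$, $p_1,\dots,p_n$ distinct reals, $N_i=1/\prod_{j\ne i}(p_i-p_j)$, $M_{i,j}$ the coefficient of $a^{j-1}$ in $\prod_{k\ne i}(a-p_k)$; $A^T\in\mathbb{R}^{n_o\times n}$, $A^T_{i,j}=p_j^{i-1}$; $G\in\mathbb{R}^{n\times n_h}$, $G_{i,j}=p_i^{j-1}N_i$; $B^T\in\mathbb{R}^{n\times n}$, $B^T_{i,j}=M_{j,i}$. For $H\in F^{n_h\times n_h}$, $X\in F^{n\times n}$, $S=A^T(GHG^T\odot B^TXB)A$ is exact, and $\hat S$ is computed as $U=fl(fl(G)Hfl(G^T))$, $V=fl(fl(B^T)Xfl(B))$, $W_{ij}=fl(U_{ij}V_{ij})$, $\hat S=fl(fl(A^T)Wfl(A))$. Floating point model: unit roundoff $\varepsilon$, no overflow, each elementary operation and each stored constant incurs relative error at most $\varepsilon$. $\odot$ Hadamard product, $|\cdot|$ entrywise absolute value, $\|\cdot\|_1$ induced matrix 1-norm,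 $\|\cdot\|_F$ Frobenius norm. *)

(* Defs.v *)
(* Real numbers are modelled by an arbitrary real closed field R
   (rcfType), which contains the needed square root for the Frobenius norm. *)
From HB Require Import structures.
From mathcomp Require Import all_boot all_order all_algebra.
Set Implicit Arguments. Unset Strict Implicit. Unset Printing Implicit Defensive.
Import Order.TTheory GRing.Theory Num.Theory.
Local Open Scope ring_scope.

Section TC.
Variable R : rcfType.

Definition tcn (no nh : nat) : nat := (no + nh).-1.

Definition tcN (n : nat) (p : 'I_n -> R) (i : 'I_n) : R :=
  (\prod_(k < n | k != i) (p i - p k))^-1.

Definition tcM (n : nat) (p : 'I_n -> R) (i j : 'I_n) : R :=
  (\prod_(k < n | k != i) ('X - (p k)%:P) : {poly R})`_j.

Definition tcAT (no nh : nat) (p : 'I_(tcn no nh) -> R) : 'M[R]_(no, tcn no nh) :=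
  \matrix_(i < no, j < tcn no nh) p j ^+ i.
Definition tcG (no nh : nat) (p : 'I_(tcn no nh) -> R) : 'M[R]_(tcn no nh, nh) :=
  \matrix_(i < tcn no nh, j < nh) (p i ^+ j * tcN p i).
Definition tcBT (no nh : nat) (p : 'I_(tcn no nh) -> R) : 'M[R]_(tcn no nh) :=
  \matrix_(i < tcn no nh, j < tcn no nh) tcM p j i.

Definition hadamard (m k : nat) (U V : 'M[R]_(m, k)) : 'M[R]_(m, k) :=
  \matrix_(i, j) (U i j * V i j).

Definition tcS (no nh : nat) (p : 'I_(tcn no nh) -> R)
    (H : 'M[R]_nh) (X : 'M[R]_(tcn no nh)) : 'M[R]_no :=
  tcAT p *m hadamard (tcG p *m H *m (tcG p)^T) ((tcBT p) *m X *m (tcBT p)^T)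
    *m (tcAT p)^T.

(* Rounding of a value x with relative error d : fl(x) = x (1 + d), |d| <= eps. *)
Definition rnd (x d : R) : R := x * (1 + d).

(* Linear (recursive) summation: given the terms y_1..y_k, each paired with the
   relative error d_l of the addition that adds y_l (unused for l = 1),
   s_1 = y_1, s_l = fl(s_{l-1} + y_l) = (s_{l-1} + y_l)(1 + d_l). *)
Definition lsum (s : seq (R * R)) : R :=
  match s with
  | [::] => 0
  | yd :: t => foldl (fun acc yd' => rnd (acc + yd'.1) yd'.2) yd.1 t
  end.

(* Floating-point matrix product: each entry is a dot product computed by
   linear summation of the rounded products;
   dm i j l : relative error of the product A_{il} B_{lj},
   da i j l : relative error of the addition of the l-th term. *)
Definition flmul (m k q : nat) (A : 'M[R]_(m, k)) (B : 'M[R]_(k, q))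
    (dm da : 'I_m -> 'I_q -> 'I_k -> R) : 'M[R]_(m, q) :=
  \matrix_(i, j) lsum [seq (rnd (A i l * B l j) (dm i j l), da i j l) | l <- enum 'I_k].

Definition flmx (m k : nat) (A E : 'M[R]_(m, k)) : 'M[R]_(m, k) :=
  \matrix_(i, j) rnd (A i j) (E i j).

Record tc_err (no nh : nat) := TcErr {
  eAT : 'M[R]_(no, tcn no nh);
  eA  : 'M[R]_(tcn no nh, no);
  eG  : 'M[R]_(tcn no nh, nh);
  eGT : 'M[R]_(nh, tcn no nh);
  eBT : 'M[R]_(tcn no nh);
  eB  : 'M[R]_(tcn no nh);
  mGH : 'I_(tcn no nh) -> 'I_nh -> 'I_nh -> R;
  aGH : 'I_(tcn no nh) -> 'I_nh -> 'I_nh -> R;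
  mU  : 'I_(tcn no nh) -> 'I_(tcn no nh) -> 'I_nh -> R;
  aU  : 'I_(tcn no nh) -> 'I_(tcn no nh) -> 'I_nh -> R;
  mBX : 'I_(tcn no nh) -> 'I_(tcn no nh) -> 'I_(tcn no nh) -> R;
  aBX : 'I_(tcn no nh) -> 'I_(tcn no nh) -> 'I_(tcn no nh) -> R;
  mV  : 'I_(tcn no nh) -> 'I_(tcn no nh) -> 'I_(tcn no nh) -> R;
  aV  : 'I_(tcn no nh) -> 'I_(tcn no nh) -> 'I_(tcn no nh) -> R;
  eW  : 'M[R]_(tcn no nh);
  mAW : 'I_no -> 'I_(tcn no nh) -> 'I_(tcn no nh) -> R;
  aAW : 'I_no -> 'I_(tcn no nh) -> 'I_(tcn no nh) -> R;
  mS  : 'I_no -> 'I_no -> 'I_(tcn no nh) -> R;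
  aS  : 'I_no -> 'I_no -> 'I_(tcn no nh) -> R
}.

Definition mx_bounded (m k : nat) (eps : R) (E : 'M[R]_(m, k)) : Prop :=
  forall i j, `|E i j| <= eps.
Definition arr_bounded (m k q : nat) (eps : R) (E : 'I_m -> 'I_k -> 'I_q -> R) : Prop :=
  forall i j l, `|E i j l| <= eps.

Definition err_bounded (no nh : nat) (eps : R) (e : tc_err no nh) : Prop :=
  mx_bounded eps (eAT e) /\ mx_bounded eps (eA e) /\ mx_bounded eps (eG e) /\
  mx_bounded eps (eGT e) /\ mx_bounded eps (eBT e) /\ mx_bounded eps (eB e) /\
  mx_bounded eps (eW e) /\
  arr_bounded eps (mGH e) /\ arr_bounded eps (aGH e) /\
  arr_bounded eps (mU e) /\ arr_bounded eps (aU e) /\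
  arr_bounded eps (mBX e) /\ arr_bounded eps (aBX e) /\
  arr_bounded eps (mV e) /\ arr_bounded eps (aV e) /\
  arr_bounded eps (mAW e) /\ arr_bounded eps (aAW e) /\
  arr_bounded eps (mS e) /\ arr_bounded eps (aS e).

(* Computed result:
   U = fl(fl(G) H fl(G^T)), V = fl(fl(B^T) X fl(B)) (products evaluated left to right),
   W_ij = fl(U_ij V_ij), Shat = fl(fl(A^T) W fl(A)). *)
Definition tcU (no nh : nat) (p : 'I_(tcn no nh) -> R) (H : 'M[R]_nh)
    (e : tc_err no nh) : 'M[R]_(tcn no nh) :=
  flmul (flmul (flmx (tcG p) (eG e)) H (mGH e) (aGH e))
        (flmx (tcG p)^T (eGT e)) (mU e) (aU e).
Definition tcV (no nh : nat) (p : 'I_(tcn no nh) -> R) (X : 'M[R]_(tcn no nh))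
    (e : tc_err no nh) : 'M[R]_(tcn no nh) :=
  flmul (flmul (flmx (tcBT p) (eBT e)) X (mBX e) (aBX e))
        (flmx (tcBT p)^T (eB e)) (mV e) (aV e).
Definition tcW (no nh : nat) (p : 'I_(tcn no nh) -> R) (H : 'M[R]_nh)
    (X : 'M[R]_(tcn no nh)) (e : tc_err no nh) : 'M[R]_(tcn no nh) :=
  \matrix_(i, j) rnd (tcU p H e i j * tcV p X e i j) (eW e i j).
Definition tcShat (no nh : nat) (p : 'I_(tcn no nh) -> R) (H : 'M[R]_nh)
    (X : 'M[R]_(tcn no nh)) (e : tc_err no nh) : 'M[R]_no :=
  flmul (flmul (flmx (tcAT p) (eAT e)) (tcW p H X e) (mAW e) (aAW e))
        (flmx (tcAT p)^T (eA e)) (mS e) (aS e).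

Definition absmx (m k : nat) (A : 'M[R]_(m, k)) : 'M[R]_(m, k) := map_mx Num.norm A.
Definition norm1 (m k : nat) (A : 'M[R]_(m, k)) : R :=
  \big[Num.max/0]_(j < k) \sum_(i < m) `|A i j|.
Definition frob (m k : nat) (A : 'M[R]_(m, k)) : R :=
  Num.sqrt (\sum_(i < m) \sum_(j < k) A i j ^+ 2).

End TC.

(* Main.v *)
Require Import Defs.
From HB Require Import structures.
From mathcomp Require Import all_boot all_order all_algebra.
From mathcomp Require Import ring lra.
Import Order.TTheory GRing.Theory Num.Theory.
Local Open Scope ring_scope.
Set Implicit Arguments. Unset Strict Implicit. Unset Printing Implicit Defensive.

Section Close.
Variable R : rcfType.
Variable eps : R.
Hypothesis heps : 0 <= eps.

Definition th (k : nat) : R := (1 + eps) ^+ k - 1.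

Lemma th0 : th 0 = 0. Proof. by rewrite /th expr0 subrr. Qed.
Lemma th_ge0 k : 0 <= th k.
Proof. by rewrite /th subr_ge0 exprn_ege1 // lerDl. Qed.
Lemma th_mono k k' : (k <= k')%N -> th k <= th k'.
Proof. by move=> h; rewrite /th lerD2r ler_weXn2l // lerDl. Qed.
Lemma thD k1 k2 : th (k1 + k2) = th k1 * th k2 + th k1 + th k2.
Proof. rewrite /th exprD. set a := (1 + eps) ^+ k1. set b := (1 + eps) ^+ k2. ring. Qed.

Definition close k (x b xh : R) := `|x| <= b /\ `|xh - x| <= b * th k.

Lemma close_b0 k x b xh : close k x b xh -> 0 <= b.
Proof. by case=> h _; apply: le_trans h. Qed.

Lemma close_exact x : close 0 x `|x| x.
Proof. by split=> //; rewrite subrr th0 mulr0 normr0. Qed.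

Lemma close_mono k k' x b xh : (k <= k')%N -> close k x b xh -> close k' x b xh.
Proof.
move=> kk [h1 h2]; split=> //; apply: le_trans h2 _.
by rewrite ler_wpM2l ?th_mono //; apply: le_trans h1.
Qed.

Lemma close_mul k1 k2 x bx xh y byy yh :
  close k1 x bx xh -> close k2 y byy yh -> close (k1 + k2) (x * y) (bx * byy) (xh * yh).
Proof.
move=> [h1 h2] [h3 h4]; split; first by rewrite normrM ler_pM.
have -> : xh * yh - x * y = (xh - x) * (yh - y) + (xh - x) * y + x * (yh - y) by ring.
rewrite thD.
have t1 := th_ge0 k1; have t2 := th_ge0 k2.
have bx0 : 0 <= bx by apply: le_trans h1.
have byy0 : 0 <= byy by apply: le_trans h3.
apply: le_trans (ler_normD _ _) _. apply: le_trans (lerD (ler_normD _ _) (lexx _)) _.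
rewrite !normrM.
have e1 : `|xh - x| * `|yh - y| <= (bx * th k1) * (byy * th k2) by rewrite ler_pM.
have e2 : `|xh - x| * `|y| <= (bx * th k1) * byy by rewrite ler_pM.
have e3 : `|x| * `|yh - y| <= bx * (byy * th k2) by rewrite ler_pM.
have -> : bx * byy * (th k1 * th k2 + th k1 + th k2) =
  (bx * th k1) * (byy * th k2) + (bx * th k1) * byy + bx * (byy * th k2) by ring.
by rewrite !lerD.
Qed.

Lemma close_add k x bx xh y byy yh :
  close k x bx xh -> close k y byy yh -> close k (x + y) (bx + byy) (xh + yh).
Proof.
move=> [h1 h2] [h3 h4]; split; first by apply: le_trans (ler_normD _ _) (lerD h1 h3).
have -> : xh + yh - (x + y) = (xh - x) + (yh - y) by ring.
by rewrite mulrDl; apply: le_trans (ler_normD _ _) (lerD h2 h4).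
Qed.

Lemma close_rnd k x b xh d : close k x b xh -> `|d| <= eps -> close k.+1 x b (rnd xh d).
Proof.
move=> h hd.
have h1 : close 1 1 1 (1 + d).
  split; first by rewrite normr1.
  by rewrite /th expr1 mul1r (addrC 1 d) (addrC 1 eps) !addrK.
have := close_mul h h1. by rewrite !mulr1 addn1.
Qed.

Lemma lsum_close (I : Type) (r : seq I) (x b y d : I -> R) k0 :
  (forall l, close k0 (x l) (b l) (y l)) -> (forall l, `|d l| <= eps) ->
  close (k0 + size r).-1 (\sum_(l <- r) x l) (\sum_(l <- r) b l)
        (lsum [seq (y l, d l) | l <- r]).
Proof.
move=> hc hd; case: r => [|l0 r] /=.
  by rewrite !big_nil; split; rewrite ?normr0 // subrr normr0 mul0r.
rewrite addnS /= !big_cons.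
have gen : forall (t : seq I) acc xa ba k, (k0 <= k)%N -> close k xa ba acc ->
   close (k + size t) (xa + \sum_(l <- t) x l) (ba + \sum_(l <- t) b l)
     (foldl (fun acc yd' => rnd (acc + yd'.1) yd'.2) acc [seq (y l, d l) | l <- t]).
  elim=> [|l t IH] acc xa ba k hk hacc /=.
    by rewrite !big_nil !addr0 addn0.
  rewrite !big_cons !addrA addnS -addSn; apply: IH; first by apply: leqW.
  by apply: close_rnd => //; apply: close_add => //; apply: close_mono (hc l).
by apply: gen => //.
Qed.

Definition closeM m n k (A bA Ah : 'M[R]_(m, n)) := forall i j, close k (A i j) (bA i j) (Ah i j).

Lemma sum_enum_ord k (F : 'I_k -> R) : \sum_(l <- enum 'I_k) F l = \sum_l F l.
Proof. by rewrite enumT. Qed.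

Lemma flmul_close m k q (A bA Ah : 'M[R]_(m, k)) (B bB Bh : 'M[R]_(k, q)) ka kb dm da :
  closeM ka A bA Ah -> closeM kb B bB Bh -> arr_bounded eps dm -> arr_bounded eps da ->
  closeM (ka + kb + k) (A *m B) (bA *m bB) (flmul Ah Bh dm da).
Proof.
move=> hA hB hdm hda i j; rewrite !mxE.
have := @lsum_close _ (enum 'I_k) (fun l => A i l * B l j) (fun l => bA i l * bB l j)
  (fun l => rnd (Ah i l * Bh l j) (dm i j l)) (da i j) (ka + kb).+1.
rewrite size_enum_ord !sum_enum_ord addSn /=; apply.
  by move=> l; apply: close_rnd; [apply: close_mul|].
by [].
Qed.

Lemma flmx_close m n (A E : 'M[R]_(m, n)) : mx_bounded eps E ->
  closeM 1 A (absmx A) (flmx A E).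
Proof. by move=> hE i j; rewrite !mxE; apply: close_rnd => //; apply: close_exact. Qed.

Lemma exact_close m n (A : 'M[R]_(m, n)) : closeM 0 A (absmx A) A.
Proof. by move=> i j; rewrite mxE; apply: close_exact. Qed.

End Close.

From mathcomp Require Import zify.

Lemma Shat_close (R : rcfType) (no nh : nat) (p : 'I_(tcn no nh) -> R)
    (H : 'M[R]_nh) (X : 'M[R]_(tcn no nh)) eps (e : tc_err R no nh) :
  0 <= eps -> err_bounded eps e ->
  closeM eps (2 * nh + 4 * tcn no nh + 7)%N (tcS p H X)
    (absmx (tcAT p)
                *m hadamard (absmx (tcG p) *m absmx H *m absmx (tcG p)^T)
                            (absmx (tcBT p) *m absmx X *m absmx (tcBT p)^T)
                *m absmx (tcAT p)^T) (tcShat p H X e).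
Proof.
move=> he [h1 [h2 [h3 [h4 [h5 [h6 [h7 [h8 [h9 [h10 [h11 [h12 [h13 [h14 [h15
  [h16 [h17 [h18 h19]]]]]]]]]]]]]]]]]].
have hU := flmul_close he (flmul_close he (flmx_close he (tcG p) h3) (exact_close eps H) h8 h9)
  (flmx_close he (tcG p)^T h4) h10 h11.
have hV := flmul_close he (flmul_close he (flmx_close he (tcBT p) h5) (exact_close eps X) h12 h13)
  (flmx_close he (tcBT p)^T h6) h14 h15.
have hW : closeM eps ((1 + 0 + nh + 1 + nh) + (1 + 0 + tcn no nh + 1 + tcn no nh)).+1
   (hadamard (tcG p *m H *m (tcG p)^T) (tcBT p *m X *m (tcBT p)^T))
   (hadamard (absmx (tcG p) *m absmx H *m absmx (tcG p)^T)
             (absmx (tcBT p) *m absmx X *m absmx (tcBT p)^T)) (tcW p H X e).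
  move=> i j; have := close_rnd he (close_mul he (hU i j) (hV i j)) (h7 i j).
  by rewrite /tcW /hadamard !mxE.
have hS := flmul_close he (flmul_close he (flmx_close he (tcAT p) h1) hW h16 h17)
  (flmx_close he (tcAT p)^T h2) h18 h19.
move=> i j; apply: close_mono (hS i j) => //; lia.
Qed.
Section Norms.
Variable R : rcfType.

Lemma th_bound (K : nat) : exists c : R, 0 <= c /\
  forall e : R, 0 <= e -> e <= 1 -> (1 + e) ^+ K - 1 <= K%:R * e + c * e ^+ 2.
Proof.
elim: K => [|K [c [c0 hc]]].
  by exists 0; split=> // e _ _; rewrite expr0 subrr mul0r add0r mul0r.
exists (K%:R + 2 * c); split; first by rewrite addr_ge0 ?mulr_ge0 ?ler0n.
move=> e e0 e1; have := hc e e0 e1; set t := (1 + e) ^+ K => ht.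
rewrite exprS -/t.
have h1 : (1 + e) * (t - 1) <= (1 + e) * (K%:R * e + c * e ^+ 2).
  by rewrite ler_wpM2l // addr_ge0.
have h2 : c * e ^+ 3 <= c * e ^+ 2.
  rewrite ler_wpM2l // exprS. rewrite -[X in _ <= X]mul1r ler_wpM2r // exprn_ge0 //.
have -> : (1 + e) * t - 1 = (1 + e) * (t - 1) + e by ring.
have -> : K.+1%:R * e + (K%:R + 2 * c) * e ^+ 2 =
  (1 + e) * (K%:R * e + c * e ^+ 2) + e + (c * e ^+ 2 - c * e ^+ 3).
  rewrite -addn1 natrD. ring.
by rewrite -addrA lerD // lerDl subr_ge0.
Qed.

Lemma norm1_le m k (A : 'M[R]_(m, k)) c : 0 <= c ->
  (forall j, \sum_i `|A i j| <= c) -> norm1 A <= c.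
Proof.
move=> c0 h; rewrite /norm1; apply: (big_ind (fun x => x <= c)) => //.
by move=> x y hx hy; rewrite ge_max hx hy.
Qed.

Lemma col_le_norm1 m k (A : 'M[R]_(m, k)) j : \sum_i `|A i j| <= norm1 A.
Proof. by rewrite /norm1 (bigD1 j) //= le_max lexx. Qed.

Lemma norm1_ge0 m k (A : 'M[R]_(m, k)) : 0 <= norm1 A.
Proof.
rewrite /norm1; apply: (big_ind (fun x => 0 <= x)) => //.
  by move=> x y hx hy; rewrite le_max hx.
by move=> j _; apply: sumr_ge0 => i _; exact: normr_ge0.
Qed.

Lemma norm1_mul m k q (A : 'M[R]_(m, k)) (B : 'M[R]_(k, q)) :
  norm1 (A *m B) <= norm1 A * norm1 B.
Proof.
apply: norm1_le; first by rewrite mulr_ge0 ?norm1_ge0.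
move=> j.
apply: le_trans (_ : \sum_i \sum_l `|A i l| * `|B l j| <= _).
  apply: ler_sum => i _; rewrite mxE; apply: le_trans (ler_norm_sum _ _ _) _.
  by apply: ler_sum => l _; rewrite normrM.
rewrite exchange_big /=.
apply: le_trans (_ : \sum_l norm1 A * `|B l j| <= _).
  apply: ler_sum => l _; rewrite -mulr_suml ler_wpM2r //; exact: col_le_norm1.
by rewrite -mulr_sumr ler_wpM2l ?norm1_ge0 // col_le_norm1.
Qed.

Lemma norm1_abs m k (A : 'M[R]_(m, k)) : norm1 (absmx A) = norm1 A.
Proof. by rewrite /norm1; apply: eq_bigr => j _; apply: eq_bigr => i _; rewrite mxE normr_id. Qed.

Lemma frob_abs m k (A : 'M[R]_(m, k)) : frob (absmx A) = frob A.
Proof.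
rewrite /frob; congr Num.sqrt; apply: eq_bigr => i _; apply: eq_bigr => j _.
by rewrite mxE real_normK // num_real.
Qed.

Lemma frob_ge0 m k (A : 'M[R]_(m, k)) : 0 <= frob A.
Proof. exact: sqrtr_ge0. Qed.

Lemma le_sqrt (x y : R) : 0 <= x -> x ^+ 2 <= y -> x <= Num.sqrt y.
Proof.
move=> x0 h; apply: le_trans (_ : Num.sqrt (x ^+ 2) <= _).
  by rewrite sqrtr_sqr ger0_norm.
exact: ler_wsqrtr.
Qed.

Lemma cs k (a b : 'I_k -> R) :
  (\sum_i a i * b i) ^+ 2 <= (\sum_i a i ^+ 2) * (\sum_i b i ^+ 2).
Proof.
set A := \sum_i a i ^+ 2; set B := \sum_i b i ^+ 2; set P := \sum_i a i * b i.
have A0 : 0 <= A by apply: sumr_ge0 => i _; exact: sqr_ge0.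
have [Az|Ap] := eqVneq A 0.
  have ha : forall i, a i = 0.
    move=> i; apply/eqP; rewrite -sqrf_eq0; apply/eqP.
    by apply: (psumr_eq0P (P := predT) (fun i _ => sqr_ge0 (a i)) Az).
  have -> : P = 0 by rewrite /P big1 // => i _; rewrite ha mul0r.
  by rewrite Az expr0n /= mul0r.
have Apos : 0 < A by rewrite lt_def Ap A0.
have E : \sum_i (A * b i - P * a i) ^+ 2 = A * (A * B - P ^+ 2).
  transitivity (\sum_i (A ^+ 2 * b i ^+ 2 - (2 * A * P) * (a i * b i) + P ^+ 2 * a i ^+ 2)).
    by apply: eq_bigr => i _; ring.
  rewrite big_split sumrB /= -!mulr_sumr -/A -/B -/P; ring.
have : 0 <= A * (A * B - P ^+ 2) by rewrite -E; apply: sumr_ge0 => i _; exact: sqr_ge0.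
by rewrite pmulr_rge0 // subr_ge0.
Qed.

Lemma frob_mul m k q (A : 'M[R]_(m, k)) (B : 'M[R]_(k, q)) :
  frob (A *m B) <= frob A * frob B.
Proof.
rewrite /frob -sqrtrM; last by apply: sumr_ge0 => i _; apply: sumr_ge0 => j _; exact: sqr_ge0.
apply: ler_wsqrtr.
apply: le_trans (_ : \sum_i \sum_j (\sum_l A i l ^+ 2) * (\sum_l B l j ^+ 2) <= _).
  by apply: ler_sum => i _; apply: ler_sum => j _; rewrite mxE; exact: cs.
rewrite mulr_suml; apply: ler_sum => i _; rewrite -mulr_sumr.
by rewrite exchange_big.
Qed.

Lemma norm1_had m k (P Q : 'M[R]_(m, k)) : norm1 (hadamard P Q) <= frob P * frob Q.
Proof.
apply: norm1_le; first by rewrite mulr_ge0 ?frob_ge0.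
move=> j.
have hP : \sum_i P i j ^+ 2 <= \sum_i \sum_l P i l ^+ 2.
  by apply: ler_sum => i _; rewrite (bigD1 j) //= lerDl sumr_ge0 // => l _; exact: sqr_ge0.
have hQ : \sum_i Q i j ^+ 2 <= \sum_i \sum_l Q i l ^+ 2.
  by apply: ler_sum => i _; rewrite (bigD1 j) //= lerDl sumr_ge0 // => l _; exact: sqr_ge0.
rewrite /frob -sqrtrM; last by apply: sumr_ge0 => i _; apply: sumr_ge0 => l _; exact: sqr_ge0.
apply: le_sqrt; first by apply: sumr_ge0 => i _; exact: normr_ge0.
apply: le_trans (_ : (\sum_i `|P i j| * `|Q i j|) ^+ 2 <= _).
  by rewrite le_eqVlt; apply/orP; left; apply/eqP; congr (_ ^+ 2); apply: eq_bigr => i _; rewrite mxE normrM.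
apply: le_trans (cs _ _) _.
rewrite ler_pM ?sumr_ge0 //; try by move=> i _; exact: sqr_ge0.
  by apply: le_trans hP; rewrite le_eqVlt; apply/orP; left; apply/eqP; apply: eq_bigr => i _; rewrite real_normK // num_real.
by apply: le_trans hQ; rewrite le_eqVlt; apply/orP; left; apply/eqP; apply: eq_bigr => i _; rewrite real_normK // num_real.
Qed.

End Norms.

Section Final.
Variable R : rcfType.
Definition nonneg m n (A : 'M[R]_(m, n)) := forall i j, 0 <= A i j.
Lemma abs_nn m n (A : 'M[R]_(m, n)) : nonneg (absmx A).
Proof. by move=> i j; rewrite mxE. Qed.
Lemma mul_nn m n q (A : 'M[R]_(m, n)) (B : 'M[R]_(n, q)) :
  nonneg A -> nonneg B -> nonneg (A *m B).
Proof. by move=> hA hB i j; rewrite mxE; apply: sumr_ge0 => l _; apply: mulr_ge0. Qed.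
Lemma had_nn m n (A B : 'M[R]_(m, n)) : nonneg A -> nonneg B -> nonneg (hadamard A B).
Proof. by move=> hA hB i j; rewrite mxE; apply: mulr_ge0. Qed.
Lemma mxsubE m n (A B : 'M[R]_(m, n)) i j : (A - B) i j = A i j - B i j.
Proof. by rewrite !mxE. Qed.
Lemma frob3 m k l q (A : 'M[R]_(m, k)) (B : 'M[R]_(k, l)) (C : 'M[R]_(l, q)) :
  frob (absmx A *m absmx B *m absmx C) <= frob A * frob B * frob C.
Proof.
apply: le_trans (frob_mul _ _) _; rewrite frob_abs ler_wpM2r ?frob_ge0 //.
by apply: le_trans (frob_mul _ _) _; rewrite !frob_abs.
Qed.
End Final.

Theorem mainTheorem4 (R : rcfType) (no nh : nat) (hno : (0 < no)%N) (hnh : (0 < nh)%N)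
    (p : 'I_(tcn no nh) -> R) (hp : injective p)
    (H : 'M[R]_nh) (X : 'M[R]_(tcn no nh)) :
  exists (C eps0 : R), 0 < eps0 /\
    forall (eps : R) (e : tc_err R no nh),
      0 <= eps -> eps <= eps0 -> err_bounded eps e ->
      (forall i j,
         `|tcShat p H X e i j - tcS p H X i j|
           <= (absmx (tcAT p)
                *m hadamard (absmx (tcG p) *m absmx H *m absmx (tcG p)^T)
                            (absmx (tcBT p) *m absmx X *m absmx (tcBT p)^T)
                *m absmx (tcAT p)^T) i j
              * ((2 * nh + 4 * tcn no nh + 7)%:R * eps)
            + C * eps ^+ 2)
      /\
      norm1 (tcShat p H X e - tcS p H X)
        <= norm1 (tcAT p) * frob (tcG p) * frob H * frob (tcG p)^T
           * frob (tcBT p) * frob X * frob (tcBT p)^T * norm1 (tcAT p)^T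
           * ((2 * nh + 4 * tcn no nh + 7)%:R * eps)
         + C * eps ^+ 2.
Proof.
set b := (absmx (tcAT p) *m _ *m _).
set K := (2 * nh + 4 * tcn no nh + 7)%N.
have bnn : nonneg b.
  by apply: mul_nn; [apply: mul_nn; [apply: abs_nn|apply: had_nn]|apply: abs_nn];
    repeat apply: mul_nn; apply: abs_nn.
have [c [c0 hc]] := th_bound R K.
set Sb := \sum_i \sum_j b i j.
have colSb : forall j, \sum_i b i j <= Sb.
  move=> j; apply: ler_sum => i _; rewrite (bigD1 j) //= lerDl.
  by apply: sumr_ge0 => l _; exact: bnn.
have bSb : forall i j, b i j <= Sb.
  move=> i j; apply: le_trans (colSb j); rewrite (bigD1 i) //= lerDl.
  by apply: sumr_ge0 => l _; exact: bnn.
exists (c * Sb), 1; split; first exact: ltr01.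
move=> eps e e0 e1 heb.
have hS := Shat_close p H X e0 heb.
have ent : forall i j, `|tcShat p H X e i j - tcS p H X i j|
   <= b i j * (K%:R * eps) + c * b i j * eps ^+ 2.
  move=> i j; have [_ h] := hS i j; apply: le_trans h _.
  have := hc eps e0 e1; rewrite -/(th eps K) => ht.
  apply: le_trans (ler_wpM2l (bnn i j) ht) _.
  by rewrite le_eqVlt; apply/orP; left; apply/eqP; ring.
split.
  move=> i j; apply: le_trans (ent i j) _; rewrite lerD2l.
  by rewrite ler_wpM2r ?sqr_ge0 // ler_wpM2l.
have hb : norm1 b <= norm1 (tcAT p) * frob (tcG p) * frob H * frob (tcG p)^T
           * frob (tcBT p) * frob X * frob (tcBT p)^T * norm1 (tcAT p)^T.
  apply: le_trans (norm1_mul _ _) _; rewrite norm1_abs ler_wpM2r ?norm1_ge0 //.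
  apply: le_trans (norm1_mul _ _) _; rewrite norm1_abs.
  rewrite -!mulrA ler_wpM2l ?norm1_ge0 //.
  apply: le_trans (norm1_had _ _) _.
  have := ler_pM (frob_ge0 _) (frob_ge0 _) (frob3 (tcG p) H (tcG p)^T)
     (frob3 (tcBT p) X (tcBT p)^T).
  by rewrite !mulrA.
have RHS0 : 0 <= K%:R * eps by rewrite mulr_ge0 ?ler0n.
apply: norm1_le.
  have Sb0 : 0 <= Sb by apply: sumr_ge0 => i _; apply: sumr_ge0 => l _; exact: bnn.
  exact: addr_ge0 (mulr_ge0 (le_trans (norm1_ge0 b) hb) RHS0)
    (mulr_ge0 (mulr_ge0 c0 Sb0) (sqr_ge0 _)).
move=> j.
apply: le_trans (_ : \sum_i (b i j * (K%:R * eps) + c * b i j * eps ^+ 2) <= _).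
  by apply: ler_sum => i _; rewrite mxsubE; exact: ent.
rewrite big_split /= -mulr_suml -mulr_suml -mulr_sumr.
apply: lerD.
  apply: ler_wpM2r => //; apply: le_trans hb.
  apply: le_trans (col_le_norm1 b j); rewrite le_eqVlt; apply/orP; left; apply/eqP.
  by apply: eq_bigr => i _; rewrite ger0_norm.
by rewrite ler_wpM2r ?sqr_ge0 // ler_wpM2l.
Qed.
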